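(* Let $G$ be a triangulation on $n$ vertices. Every independent set $I$ of vertices of $G$, each of degree at least six in $G$, satisfies $|I|\le (n-2)/3$.
   Context: Graphs are finite, undirected and simple. A triangulation is a planar graph embedded in the plane such that every face, including the outer face, is bounded by a cycle on three edges. A set of vertices is independent if no two of its vertices are adjacent. *)

(* Defs.v *)
From mathcomp Require Import all_boot.
From mathcomp Require Import fingroup perm.
Set Implicit Arguments. Unset Strict Implicit. Unset Printing Implicit Defensive.

Definition simple_graph (V : finType) (adj : rel V) : Prop :=
  symmetric adj /\ irreflexive adj.

Definition deg (V : finType) (adj : rel V) (v : V) : nat := #|[set w | adj v w]|.

Definition independent (V : finType) (adj : rel V) (I : {set V}) : Prop :=
  forall u v, u \in I -> v \in I -> ~~ adj u v.

(* Plane embedding as a combinatorial map (rotation system):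
   darts D, tail : D -> V, alpha = edge involution (reverses a dart),
   sigma = rotation of the darts around their tail vertex,
   faces = orbits of phi := sigma \o alpha (face traversal).
   The map is plane (genus 0) iff Euler's formula V - E + F = 2 holds. *)
Definition face_perm (D : finType) (alpha sigma : {perm D}) : D -> D :=
  fun d => sigma (alpha d).

Definition plane_map_of (V : finType) (adj : rel V)
    (D : finType) (tail : D -> V) (alpha sigma : {perm D}) : Prop :=
  (
      ((forall d, alpha (alpha d) = d) /\ (forall d, alpha d != d)) /\
      ((forall d, tail (sigma d) = tail d) /\
      (forall d d', tail d = tail d' -> fconnect sigma d d')) /\
      ((forall v, exists d, tail d = v) /\
      (forall u v, adj u v <-> exists d, tail d = u /\ tail (alpha d) = v)) /\
      (forall d d', tail d = tail d' -> tail (alpha d) = tail (alpha d') -> d = d') /\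
      (forall u v, connect adj u v) /\
      (#|V| + fcard (face_perm alpha sigma) predT = #|D|./2 + 2)%N).

Definition triangulation (V : finType) (adj : rel V) : Prop :=
  simple_graph adj /\
  exists (D : finType) (tail : D -> V) (alpha sigma : {perm D}),
    plane_map_of adj tail alpha sigma /\
    (forall d, fingraph.order (face_perm alpha sigma) d = 3%N).

(* Main.v *)
Require Import Defs.
From mathcomp Require Import all_boot.
From mathcomp Require Import fingroup perm.
From mathcomp Require Import zify.

Theorem mainTheorem2 (V : finType) (adj : rel V) (I : {set V}) :
  triangulation adj ->
  independent adj I ->
  (forall v, v \in I -> 6 <= deg adj v) ->
  3 * #|I| <= #|V| - 2.
Proof.
move=> [[symA irrA] [D [tail [alpha [sigma [[[aa afix] [[tsig tcon] [[tsurj tadj] [nomult [conn euler]]]]] ord3]]]]]] indI degI.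
set phi := face_perm alpha sigma.
have phi_inj : injective phi.
  by move=> x y; rewrite /phi /face_perm => /perm_inj /perm_inj.
have phi3 : forall d, phi (phi (phi d)) = d.
  by move=> d; have := iter_order phi_inj d; rewrite ord3.
have adjphi : forall d, adj (tail d) (tail (phi d)).
  move=> d; rewrite /phi /face_perm tsig; apply/tadj; by exists d.
have hF : fcard phi predT * 3 = #|D|.
  apply: (fcard_order_set phi_inj).
    by apply/subsetP => x _; rewrite inE ord3.
  by move=> x y _.
set S := [set d | tail d \in I].
have hS : 6 * #|I| <= #|S|.
  have -> : #|S| = \sum_(v in I) #|[set d | tail d == v]|.
    rewrite -sum1_card (partition_big tail (mem I)) /=; last by move=> d; rewrite inE.
    apply: eq_bigr => v vI; rewrite -sum1_card; apply: eq_bigl => d.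
    rewrite !inE; case: eqP => [->|]; by rewrite ?vI ?andbF.
  rewrite mulnC -sum_nat_const; apply: leq_sum => v vI.
  apply: leq_trans (degI v vI) _; rewrite /deg.
  apply: leq_trans (leq_imset_card (fun d => tail (alpha d)) _).
  apply: subset_leq_card; apply/subsetP => w; rewrite inE => /tadj [d [td tad]].
  by apply/imsetP; exists d; rewrite ?inE ?td.
have hD : 3 * #|S| <= #|D|.
  have noadj : forall d d', d \in S -> d' \in S -> d = phi d' -> False.
    move=> d d'; rewrite !inE => dI d'I e.
    by move: (indI _ _ d'I dI); rewrite e adjphi.
  have c1 : #|phi @: S| = #|S| by apply: card_imset.
  have c2 : #|phi @: (phi @: S)| = #|S| by rewrite card_imset.
  have d1 : [disjoint S & phi @: S].
    apply/pred0P => d /=; apply/negP => /andP [dS /imsetP [d' d'S e]].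
    exact: noadj dS d'S e.
  have d2 : [disjoint S :|: phi @: S & phi @: (phi @: S)].
    apply/pred0P => d /=; apply/negP => /andP [/setUP H Hd].
    case/imsetP: Hd => d1' Hd1 e; case/imsetP: Hd1 => d' d'S e1.
    subst d1'; case: H => [dS|/imsetP [d2 d2S e2]].
      apply: (noadj d' d) => //; by rewrite e phi3.
    rewrite e2 in e; move/phi_inj: e => e; exact: (noadj d2 d' d2S d'S e).
  have u1 := leq_card_setU S (phi @: S).
  have u2 := leq_card_setU (S :|: phi @: S) (phi @: (phi @: S)).
  case: u1 => _; rewrite d1 => /eqP e1; case: u2 => _; rewrite d2 => /eqP e2.
  have := max_card (mem (S :|: phi @: S :|: phi @: (phi @: S))).
  rewrite e2 e1 c1 c2; lia.
have F := fcard phi predT.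
move: hF euler; rewrite -/phi; lia.
Qed.
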